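(* Let $u,v\ge0$ be real numbers and let $\mu=\sum_{i,j\ge0}\sum_{\sigma\in\Delta}c_{\sigma,i,j}\sigma X^iY^j\in D^{(u,v)}(G_{p^\infty},F)$. Let $\omega_{\mathfrak p}\in\Omega_{\mathfrak p}$ and put $F'=F(\omega_{\mathfrak p}(\gamma_{\mathfrak p}))$. Then the distribution $\mu^{(\omega_{\mathfrak p})}$ lies in $D^{(v)}(G_{\overline{\mathfrak p}^\infty},F')$.
   Context: Let $K$ be an imaginary quadratic field in which the odd prime $p$ splits as $\mathfrak p\overline{\mathfrak p}$. For an ideal $\mathfrak I$ of $K$, $G_{\mathfrak I}$ is the ray class group of $K$ modulo $\mathfrak I$; $G_{p^\infty}=\varprojlim G_{p^n}$, $G_{\mathfrak p^\infty}=\varprojlim G_{\mathfrak p^n}$, $G_{\overline{\mathfrak p}^\infty}=\varprojlim G_{\overline{\mathfrak p}^n}$. Fix topological generators $\gamma_{\mathfrak p},\gamma_{\overline{\mathfrak p}}$ of the $\mathbb{Z}_p$-parts of $G_{\mathfrak p^\infty}$, $G_{\overline{\mathfrak p}^\infty}$, so $G_{p^\infty}\cong\Delta\times\langle\gamma_{\mathfrak p}\rangle\times\langle\gamma_{\overline{\mathfrak p}}\rangle$ with $\Delta$ finite abelian; $X=\gamma_{\mathfrak p}-1$, $Y=\gamma_{\overline{\mathfrak p}}-1$. $F$ is a finite extension of $\mathbb{Q}_p$ containing $\mu_{|\Delta|}$. For $u,v\ge0$, $D^{(u,v)}(G_{p^\infty},F)$ is the set of $\sum_{i,j\ge0}\sum_{\sigma\in\Delta}c_{\sigma,i,j}\sigma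 X^iY^j$ with $c_{\sigma,i,j}\in F$ and $\sup_{i,j}|c_{\sigma,i,j}|_p/(i^uj^v)<\infty$ for all $\sigma$ (powers of $0$ read as $1$). One-variable spaces $D^{(v)}(\cdot,F')$ are defined analogously with a single variable: series $\sum_j\sum_\sigma c_{\sigma,j}\sigma Y^j$ with $\sup_j|c_{\sigma,j}|_p/j^v<\infty$. For $\star\in\{\mathfrak p,\overline{\mathfrak p}\}$, $\Omega_\star$ is the set of characters of $G_{p^\infty}$ of conductor $\star^n$ for some $n\ge1$. For $\omega_{\mathfrak p}\in\Omega_{\mathfrak p}$, $\mu^{(\omega_{\mathfrak p})}$ denotes the one-variable distribution $\sum_{j\ge0}\sum_{\sigma\in\Delta}\big(\sum_{i\ge0}c_{\sigma,i,j}(\omega_{\mathfrak p}(\gamma_{\mathfrak p})-1)^i\big)\sigma Y^j$ (up to the root-of-unity factors $\omega_{\mathfrak p}(\sigma)$), characterised by $\mu^{(\omega_{\mathfrak p})}(\omega_{\overline{\mathfrak p}})=\mu(\omega_{\mathfrak p}\omega_{\overline{\mathfrak p}})$ for $\omega_{\overline{\mathfrak p}}\in\Omega_{\overline{\mathfrak p}}$. *)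

(* Defs.v *)
From HB Require Import structures.
From mathcomp Require Import all_boot all_order all_algebra.
From mathcomp Require Import all_classical all_reals all_analysis.
Set Implicit Arguments. Unset Strict Implicit. Unset Printing Implicit Defensive.
Import Order.TTheory GRing.Theory Num.Theory.
Local Open Scope ring_scope.

Definition is_nonarch_abs (R : realType) (L : fieldType) (abs : L -> R) : Prop :=
  [/\ forall x, 0 <= abs x,
      forall x, abs x = 0 <-> x = 0,
      forall x y, abs (x * y) = abs x * abs y
    & forall x y, abs (x + y) <= Num.max (abs x) (abs y)].

Definition abs_cvg (R : realType) (L : fieldType) (abs : L -> R)
  (s : nat -> L) (l : L) : Prop :=
  forall e : R, 0 < e -> exists N : nat, forall n, (N <= n)%N -> abs (l - s n) < e.

Definition abs_cauchy (R : realType) (L : fieldType) (abs : L -> R)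
  (s : nat -> L) : Prop :=
  forall e : R, 0 < e -> exists N : nat, forall m n, (N <= m)%N -> (N <= n)%N ->
    abs (s m - s n) < e.

Definition abs_complete (R : realType) (L : fieldType) (abs : L -> R) : Prop :=
  forall s : nat -> L, abs_cauchy abs s -> exists l, abs_cvg abs s l.

Definition abs_series_to (R : realType) (L : fieldType) (abs : L -> R)
  (a : nat -> L) (l : L) : Prop :=
  abs_cvg abs (fun n => \sum_(i < n) a i) l.

(* i^u with the convention 0^u = 1 ("powers of 0 read as 1") *)
Definition wpow (R : realType) (i : nat) (u : R) : R :=
  if i == 0%N then 1 else powR (i%:R) u.

(* Coefficient families of D^{(u,v)}(G_{p^infty}, L):
   sup_{i,j} |c_{sigma,i,j}| / (i^u j^v) < infinity for every sigma. *)
Definition in_D2 (R : realType) (L : fieldType) (abs : L -> R) (Delta : finType)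
  (u v : R) (c : Delta -> nat -> nat -> L) : Prop :=
  forall sigma, exists C : R, forall i j,
    abs (c sigma i j) <= C * (wpow i u * wpow j v).

(* One-variable coefficient families of D^{(v)}(., L). *)
Definition in_D1 (R : realType) (L : fieldType) (abs : L -> R) (Delta : finType)
  (v : R) (d : Delta -> nat -> L) : Prop :=
  forall sigma, exists C : R, forall j, abs (d sigma j) <= C * wpow j v.

(* Main.v *)
Require Import Defs.
From HB Require Import structures.
From mathcomp Require Import all_boot all_order all_algebra.
From mathcomp Require Import all_classical all_reals all_analysis.
From mathcomp Require Import ring lra.
Import Order.TTheory GRing.Theory Num.Theory.
Set Implicit Arguments. Unset Strict Implicit.
Local Open Scope ring_scope.

Lemma nabs0 (R : realType) (L : fieldType) (abs : L -> R) :
  is_nonarch_abs abs -> abs 0 = 0.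
Proof. by case=> _ H _ _; apply/H. Qed.

Lemma nabs1 (R : realType) (L : fieldType) (abs : L -> R) :
  is_nonarch_abs abs -> abs 1 = 1.
Proof.
case=> H0 H1 HM _.
have h := HM 1 1; rewrite mulr1 in h.
have : abs 1 != 0 by apply/eqP => /H1 /eqP; rewrite oner_eq0.
move: (H0 1) => ? ?; nra.
Qed.

Lemma nabsN1 (R : realType) (L : fieldType) (abs : L -> R) :
  is_nonarch_abs abs -> abs (-1) = 1.
Proof.
move=> Ha; have h1 := nabs1 Ha; case: Ha=> H0 H1 HM _.
have h := HM (-1) (-1); rewrite mulrNN mulr1 h1 in h.
move: (H0 (-1)) => ?; nra.
Qed.

Lemma nabsM (R : realType) (L : fieldType) (abs : L -> R) :
  is_nonarch_abs abs -> forall x y, abs (x * y) = abs x * abs y.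
Proof. by case=> _ _ HM _; apply: HM. Qed.

Lemma nabsN (R : realType) (L : fieldType) (abs : L -> R) :
  is_nonarch_abs abs -> forall x, abs (- x) = abs x.
Proof. by move=> Ha x; rewrite -mulN1r (nabsM Ha) (nabsN1 Ha) mul1r. Qed.

Lemma nabsB (R : realType) (L : fieldType) (abs : L -> R) :
  is_nonarch_abs abs -> forall x y, abs (x - y) = abs (y - x).
Proof. by move=> Ha x y; rewrite -(nabsN Ha) opprB. Qed.

Lemma nabsD (R : realType) (L : fieldType) (abs : L -> R) :
  is_nonarch_abs abs -> forall x y B, abs x <= B -> abs y <= B -> abs (x + y) <= B.
Proof.
case=> _ _ _ HD x y B hx hy; apply: le_trans (HD x y) _.
by rewrite ge_max hx hy.
Qed.

Lemma nabs_ge0 (R : realType) (L : fieldType) (abs : L -> R) :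
  is_nonarch_abs abs -> forall x, 0 <= abs x.
Proof. by case. Qed.

Lemma nabsX (R : realType) (L : fieldType) (abs : L -> R) :
  is_nonarch_abs abs -> forall x k, abs (x ^+ k) = abs x ^+ k.
Proof.
move=> Ha x k; elim: k => [|k IH]; first by rewrite !expr0 (nabs1 Ha).
by rewrite !exprS (nabsM Ha) IH.
Qed.

Lemma nabsn (R : realType) (L : fieldType) (abs : L -> R) :
  is_nonarch_abs abs -> forall k, abs (k%:R : L) <= 1.
Proof.
move=> Ha k; elim: k => [|k IH]; first by rewrite (nabs0 Ha).
by rewrite -addn1 natrD; apply: nabsD => //; rewrite (nabs1 Ha).
Qed.

Lemma nabs_sum (R : realType) (L : fieldType) (abs : L -> R) (I : Type)
  (r : seq I) (P : pred I) (F : I -> L) B :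
  is_nonarch_abs abs -> 0 <= B -> (forall i, P i -> abs (F i) <= B) ->
  abs (\sum_(i <- r | P i) F i) <= B.
Proof.
move=> Ha HB HF; apply: (big_ind (fun x => abs x <= B)) => //.
  by rewrite (nabs0 Ha).
by move=> x y; apply: nabsD.
Qed.


Lemma zeta_small (R : realType) (L : fieldType) (abs : L -> R) (p : nat) :
  is_nonarch_abs abs -> prime p -> (2 < p)%N -> abs (p%:R) < 1 ->
  forall n (z : L), z ^+ (p ^ n) = 1 -> abs (z - 1) < 1.
Proof.
move=> Ha; case: p => [|[|[|q]]] // pp _ hp n.
have hp0 := nabs_ge0 Ha (q.+3%:R : L).
have [_ _ _ HD] := Ha.
elim: n => [|n IH] z hz.
  by rewrite expn0 expr1 in hz; rewrite hz subrr (nabs0 Ha).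
have hzp : abs (z ^+ q.+3 - 1) < 1 by apply: IH; rewrite -exprM -expnS.
have habsz : abs z = 1.
  have h : abs z ^+ (q.+3 ^ n.+1) = 1 by rewrite -(nabsX Ha) hz (nabs1 Ha).
  apply/eqP; rewrite -(@pexpr_eq1 _ _ (q.+3 ^ n.+1)) ?h ?expn_gt0 //.
  exact: nabs_ge0.
set y := z - 1.
have hy1 : abs y <= 1 by apply: nabsD; rewrite ?(nabsN Ha) ?(nabs1 Ha) ?habsz.
have hz1 : z = 1 + y by rewrite /y addrC subrK.
have hy0 := nabs_ge0 Ha y.
set M := \sum_(i < q.+2) (1 ^+ (q.+3 - (bump 0 i)) * y ^+ (bump 0 i)
               *+ 'C(q.+3, bump 0 i)).
have hexp : z ^+ q.+3 - 1 = y ^+ q.+3 + M.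
  rewrite hz1 exprDn big_ord_recr /= big_ord_recl /= -/M.
  rewrite subn0 subnn bin0 binn !expr1n !expr0 !mul1r !mulr1n; ring.
have hM : abs M <= abs (q.+3%:R : L).
  apply: nabs_sum => // i _.
  have /dvdnP [m hm] : (q.+3 %| 'C(q.+3, bump 0 i))%N.
    apply: prime_dvd_bin => //; rewrite /bump /= add1n ltnS.
    by rewrite (leq_trans (ltn_ord i)).
  rewrite hm expr1n mul1r -mulr_natr natrM (nabsM Ha) (nabsM Ha) (nabsX Ha).
  have h1 : abs y ^+ (bump 0 i) <= 1 by apply: exprn_ile1.
  have h2 := nabsn Ha m.
  have h3 := nabs_ge0 Ha (m%:R : L).
  have h4 : 0 <= abs y ^+ bump 0 i by apply: exprn_ge0.
  have h5 : abs (m%:R : L) * abs (q.+3%:R : L) <= abs (q.+3%:R : L) by nra.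
  have h6 : 0 <= abs (m%:R : L) * abs (q.+3%:R : L) by nra.
  nra.
have hyp : abs y ^+ q.+3 < 1.
  rewrite -(nabsX Ha).
  have -> : y ^+ q.+3 = (z ^+ q.+3 - 1) + - M by rewrite hexp addrK.
  apply: le_lt_trans (HD _ _) _; rewrite gt_max hzp (nabsN Ha).
  by apply: le_lt_trans hM hp.
rewrite ltNge; apply/negP => /(exprn_ege1 q.+3); rewrite leNgt hyp.
done.
Qed.

Lemma bern (R : realType) (t : R) (i : nat) : 0 <= t -> 1 + i%:R * t <= (1 + t) ^+ i.
Proof.
move=> t0; elim: i => [|i IH]; first by rewrite mul0r addr0 expr0.
rewrite exprS -addn1 natrD.
have h : 0 <= i%:R * t by apply: mulr_ge0.
nra.
Qed.

Lemma wpow_ge0 (R : realType) i (u : R) : 0 <= wpow i u.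
Proof. by rewrite /wpow; case: ifP => // _; apply: powR_ge0. Qed.

Lemma bounded_geo (R : realType) (u r : R) : 0 <= u -> 0 <= r -> r < 1 ->
  exists K, 0 <= K /\ forall i, wpow i u * r ^+ i <= K.
Proof.
move=> u0 r0 r1.
have hri i : r ^+ i <= 1 by apply: exprn_ile1; lra.
have [->|upos] := eqVneq u 0.
  exists 1; split => // i; rewrite /wpow; case: ifP => _; rewrite ?powRr0 mul1r //.
have {upos} upos : 0 < u by rewrite lt_neqAle eq_sym upos.
set r' := (1 + r) / 2.
have r'0 : 0 < r' by rewrite /r'; lra.
have r'1 : r' < 1 by rewrite /r'; lra.
set rho := r' `^ (u^-1).
have rho0 : 0 < rho by apply: powR_gt0.
have rhou : rho `^ u = r'.
  by rewrite /rho -powRrM mulVf ?powRr1 //; [lra | rewrite gt_eqF].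
have rho1 : rho < 1.
  have : rho `^ u < 1 `^ u by rewrite rhou powR1.
  apply: contra_ltT => h; apply: ge0_ler_powR => //; rewrite ?nnegrE; lra.
set t := rho^-1 - 1.
have t0 : 0 < t by rewrite /t subr_gt0 invf_gt1.
have key i : i%:R * rho ^+ i <= t^-1.
  have e : 1 + t = rho^-1 by rewrite /t addrC subrK.
  have := bern i (ltW t0); rewrite e exprVn => h.
  have ha : 0 < rho ^+ i by apply: exprn_gt0.
  have hinv : (rho ^+ i)^-1 * rho ^+ i = 1 by rewrite mulVf // gt_eqF.
  have hit : 0 <= i%:R * t by apply: mulr_ge0; [exact: ler0n | lra].
  rewrite -[t^-1]mul1r ler_pdivlMr //.
  have := ler_wpM2r (ltW ha) h; rewrite hinv mulrDl mul1r => h3.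
  have : i%:R * rho ^+ i * t = i%:R * t * rho ^+ i by ring.
  lra.
exists (Num.max 1 (t^-1 `^ u)); split; first by rewrite le_max ler01.
case=> [|i]; first by rewrite /wpow /= mul1r expr0 le_max lexx.
rewrite /wpow /= le_max; apply/orP; right.
apply: (@le_trans _ _ ((i.+1)%:R `^ u * r' ^+ i.+1)).
  apply: ler_wpM2l; first exact: powR_ge0.
  by apply: lerXn2r; rewrite ?nnegrE /r'; lra.
have -> : r' ^+ i.+1 = (rho ^+ i.+1) `^ u.
  rewrite -(powR_mulrn _ (ltW rho0)) -powRrM mulrC powRrM rhou powR_mulrn //.
  lra.
rewrite -powRM //; last exact: exprn_ge0 (ltW rho0).
apply: ge0_ler_powR => //; rewrite ?nnegrE //.
  by apply: mulr_ge0 => //; apply: exprn_ge0; lra.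
by rewrite invr_ge0; lra.
Qed.

Lemma tends_geo (R : realType) (u r : R) : 0 <= u -> 0 <= r -> r < 1 ->
  forall e : R, 0 < e -> exists N : nat, forall i, (N <= i)%N -> wpow i u * r ^+ i < e.
Proof.
move=> u0 r0 r1 e e0.
have [K [K0 HK]] := @bounded_geo _ (u + 1) r (addr_ge0 u0 ler01) r0 r1.
have hKe : 0 <= K / e by apply: divr_ge0 => //; lra.
exists (Num.Def.archi_bound (K / e)).+1 => i hi.
have hb := archi_boundP hKe.
have hi' : (Num.Def.archi_bound (K / e))%:R < i%:R :> R by rewrite ltr_nat.
have hKi : K < i%:R * e.
  by rewrite -ltr_pdivrMr //; apply: lt_trans hb hi'.
case: i hi hi' hKi => [//|i] _ hi' hKi.
have := HK i.+1.
have -> : wpow i.+1 (u + 1) = i.+1%:R * wpow i.+1 u.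
  rewrite /wpow /= powRD; last by rewrite pnatr_eq0 implybT.
  by rewrite powRr1 ?ler0n // mulrC.
have hf : 0 <= wpow i.+1 u * r ^+ i.+1 by apply: mulr_ge0; [exact: wpow_ge0 | exact: exprn_ge0].
have hi0 : 0 < i.+1%:R :> R by rewrite ltr0n.
move=> h; rewrite -mulrA in h.
nra.
Qed.

Lemma series_ex (R : realType) (L : fieldType) (abs : L -> R) :
  is_nonarch_abs abs -> abs_complete abs ->
  forall (a : nat -> L) (B : R), 0 <= B -> (forall i, abs (a i) <= B) ->
  (forall e : R, 0 < e -> exists N : nat, forall i, (N <= i)%N -> abs (a i) < e) ->
  exists s, abs_series_to abs a s /\ abs s <= B.
Proof.
move=> Ha Hc a B B0 HB Ht.
pose S n := \sum_(i < n) a i.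
have tail n k e : 0 <= e -> (forall i, (n <= i)%N -> abs (a i) <= e) ->
    abs (S (n + k)%N - S n) <= e.
  move=> e0 He; elim: k => [|k IH]; first by rewrite addn0 subrr (nabs0 Ha).
  rewrite addnS /S big_ord_recr /= -/(S _).
  rewrite addrAC; apply: nabsD => //; apply: He; exact: leq_addr.
have [s Hs] : exists s, abs_cvg abs S s.
  apply: Hc => e e0.
  have [N HN] := Ht (e / 2) (ltac:(lra) : 0 < e / 2).
  exists N => m n hm hn.
  have he2 : e / 2 < e by lra.
  have he0 : 0 <= e / 2 by lra.
  have hb i : (N <= i)%N -> abs (a i) <= e / 2 by move=> /HN /ltW.
  case: (leqP n m) => hnm.
    rewrite -(subnKC hnm); apply: le_lt_trans he2.
    by apply: tail => // i hi; apply: hb; apply: leq_trans hi.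
  rewrite (nabsB Ha) -(subnKC (ltnW hnm)); apply: le_lt_trans he2.
  by apply: tail => // i hi; apply: hb; apply: leq_trans hi.
exists s; split => //.
rewrite leNgt; apply/negP => hlt.
have hsb : 0 < abs s - B by rewrite subr_gt0.
have [N HN] := Hs (abs s - B) hsb.
have h1 := HN N (leqnn N).
have h2 : abs (S N) <= B by apply: nabs_sum.
have [_ _ _ HD] := Ha.
have := HD (s - S N) (S N); rewrite subrK.
have : Num.max (abs (s - S N)) (abs (S N)) < abs s.
  by rewrite gt_max; apply/andP; split; lra.
move=> h3 h4; have := le_lt_trans h4 h3; by rewrite ltxx.
Qed.

Unset Implicit Arguments. Set Strict Implicit.

Theorem lemma2p1 (R : realType) (L : fieldType) (abs : L -> R) (p : nat)
  (Delta : finType) (u v : R) (c : Delta -> nat -> nat -> L)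
  (zeta : L) (n : nat) (w : Delta -> L) :
  prime p -> (2 < p)%N ->
  is_nonarch_abs abs -> abs_complete abs -> abs (p%:R) < 1 ->
  0 <= u -> 0 <= v ->
  in_D2 abs u v c ->
  zeta ^+ (p ^ n) = 1 ->
  (forall sigma, w sigma ^+ #|Delta| = 1) ->
  exists d : Delta -> nat -> L,
    (forall sigma j,
       exists s : L,
         abs_series_to abs (fun i => c sigma i j * (zeta - 1) ^+ i) s
         /\ d sigma j = w sigma * s)
    /\ in_D1 abs v d.
Proof.
move=> pp p2 Ha Hc hp u0 v0 HD2 hz _.
have r1 := zeta_small Ha pp p2 hp hz.
set r := abs (zeta - 1) in r1.
have r0 : 0 <= r by apply: nabs_ge0.
have [K [K0 HK]] := bounded_geo u0 r0 r1.
have main sigma : exists f : nat -> L, exists C' : R, forall j,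
    abs_series_to abs (fun i => c sigma i j * (zeta - 1) ^+ i) (f j)
    /\ abs (f j) <= C' * wpow j v.
  have [C HC] := HD2 sigma.
  suff : forall j, exists s, abs_series_to abs (fun i => c sigma i j * (zeta - 1) ^+ i) s
      /\ abs s <= (C * K) * wpow j v.
    by move/choice => [f Hf]; exists f, (C * K).
  move=> j.
  set A := C * wpow j v.
  have A0 : 0 <= A.
    have := HC 0%N j; rewrite /wpow eqxx mul1r -/(wpow j v) => h.
    exact: le_trans (nabs_ge0 Ha _) h.
  have Hb i : abs (c sigma i j * (zeta - 1) ^+ i) <= A * (wpow i u * r ^+ i).
    rewrite (nabsM Ha) (nabsX Ha) -/r.
    have := HC i j => h.
    have hr : 0 <= r ^+ i by apply: exprn_ge0.
    have -> : A * (wpow i u * r ^+ i) = C * (wpow i u * wpow j v) * r ^+ i.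
      by rewrite /A; ring.
    by apply: ler_wpM2r.
  have Ht : forall e : R, 0 < e -> exists N : nat, forall i, (N <= i)%N ->
      abs (c sigma i j * (zeta - 1) ^+ i) < e.
    move=> e e0.
    have hA1 : 0 < A + 1 by lra.
    have [N HN] := tends_geo u0 r0 r1 (divr_gt0 e0 hA1).
    exists N => i hi.
    apply: le_lt_trans (Hb i) _.
    have h := HN i hi.
    have hf : 0 <= wpow i u * r ^+ i by apply: mulr_ge0; [exact: wpow_ge0 | exact: exprn_ge0].
    have he : e / (A + 1) * (A + 1) = e by rewrite divfK // gt_eqF.
    nra.
  have [s [Hs Hsb]] := series_ex Ha Hc (mulr_ge0 A0 K0)
    (fun i => le_trans (Hb i) (ler_wpM2l A0 (HK i))) Ht.
  exists s; split => //; by rewrite -mulrA [K * _]mulrC mulrA.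
have [F HF] := choice main.
exists (fun sigma j => w sigma * F sigma j); split.
  move=> sigma j; exists (F sigma j); split => //.
  by have [C' HC'] := HF sigma; have [] := HC' j.
move=> sigma; have [C' HC'] := HF sigma.
exists (abs (w sigma) * C') => j.
rewrite (nabsM Ha) -mulrA; apply: ler_wpM2l; first exact: nabs_ge0.
by have [] := HC' j.
Qed.
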